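(* Let $T$ be a tree on $[m]$ with depth-first walk $X$ and height process $H$, and let $\mathcal Q\subset\mathbb Z_{\ge0}\times\mathbb Z_{\ge0}$ be finite. Suppose $\mathcal Q\cap X=\mathcal Q\cap(H/2)$ and let $k=|\mathcal Q\cap X|$. Then, viewing $G^X=G^X(T,\mathcal Q)$ and $G^H=G^H(T,\mathcal Q)$ as metric spaces on their common vertex set with graph distance (rooted at vertex $1$), \[d_{GH}(G^X,G^H)\le k\big(\max_{0\le i<m}|X(i)-H(i)/2|+2\big).\]
   Context: Ordered depth-first search ${\bf oDFS}(T)$ for a tree $T$ on $[m]$ rooted at $1$: set $\mathcal O_0=(1)$ (ordered list), $\mathcal A_0=\emptyset$; for $i=0,\dots,m-1$ let $v_i$ be the first element of $\mathcal O_i$, $\mathcal N_i$ the neighbours of $v_i$ outside $\mathcal A_i\cup\mathcal O_i$, $\mathcal A_{i+1}=\mathcal A_i\cup\{v_i\}$, and $\mathcal O_{i+1}$ obtained by deleting $v_i$ from the front and placing $\mathcal N_i$ in increasing order at the front. Depth-first walk $X(i)=|\mathcal O_i|-1$; height process $H(i)=$ distance in $T$ from $1$ to $v_i$ ($0\le i<m$; both set to $0$ for $i\ge m$). For $S\subset\mathbb R^+\times\mathbb R^+$ and $f$, $S\cap f:=\{(x,y)\in S:0<y\le f(x)\}$. $G^X(T,\mathcal Q)$: add to $T$, for each $(i,j)\in\mathcal Q\cap X$, an edge between $v_i$ and the $j$-th vertex of $\mathcal O_i$ counted from the end of the list. $G^H(T,\mathcal Q)$: add to $T$, for each $(i,j)\in\mathcal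 Q$ with $0<2j\le H(i)$, an edge between $v_i$ and the vertex at distance $2j-1$ from the root on the path from the root to $v_i$ in $T$. Gromov–Hausdorff distance between rooted compact metric spaces $(X,\rho),(X',\rho')$: $d_{GH}=\inf\{d_H(\phi(X),\phi'(X'))\vee\delta(\phi(\rho),\phi'(\rho'))\}$ over all metric spaces $(M,\delta)$ and isometric embeddings $\phi:X\to M$, $\phi':X'\to M$, where $d_H$ is the Hausdorff distance. *)

(* Defs.v *)
From Stdlib Require Import Reals.
From mathcomp Require Import all_boot.
Set Implicit Arguments. Unset Strict Implicit. Unset Printing Implicit Defensive.

Definition vset (m : nat) : seq nat := iota 1 m.

Definition walkb (g : rel nat) (m u v n : nat) : bool :=
  [exists t : n.-tuple 'I_m.+1,
     path g u (map val t) && (last u (map val t) == v)].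

(* Graph distance on a graph with vertex set [m]: the least n such that
   a walk of length n from u to v exists (for connected graphs this is
   < m; convention: m if no such walk exists). *)
Definition gdist (g : rel nat) (m u v : nat) : nat :=
  find (walkb g m u v) (iota 0 m).

Definition is_tree (m : nat) (T : rel nat) : Prop :=
  [/\ (forall u v, T u v = T v u),
      (forall u, ~~ T u u),
      (forall u v, T u v -> (1 <= u <= m) && (1 <= v <= m)),
      (forall v, 1 <= v <= m -> exists p : seq nat, path T 1 p && (last 1 p == v))
    & size [seq e <- [seq (u, v) | u <- vset m, v <- vset m]
             | (e.1 < e.2) && T e.1 e.2] = m.-1].

(* Ordered depth-first search oDFS(T). State = (O_i, A_i). *)
Definition nbrs (m : nat) (T : rel nat) (v : nat) (Os As : seq nat) : seq nat :=
  [seq w <- iota 1 m | T v w && (w \notin As) && (w \notin Os)].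

Definition dfs_step (m : nat) (T : rel nat) (s : seq nat * seq nat)
  : seq nat * seq nat :=
  let: (Os, As) := s in
  let v := head 0 Os in (nbrs m T v Os As ++ behead Os, v :: As).

Definition dfs_state (m : nat) (T : rel nat) (i : nat) : seq nat * seq nat :=
  iter i (dfs_step m T) ([:: 1], [::]).

Definition dfsO (m : nat) (T : rel nat) (i : nat) : seq nat := (dfs_state m T i).1.
Definition dfsv (m : nat) (T : rel nat) (i : nat) : nat := head 0 (dfsO m T i).
Definition dfsX (m : nat) (T : rel nat) (i : nat) : nat :=
  if i < m then (size (dfsO m T i)).-1 else 0.
Definition height (m : nat) (T : rel nat) (i : nat) : nat :=
  if i < m then gdist T m 1 (dfsv m T i) else 0.

Definition tparent (m : nat) (T : rel nat) (v : nat) : nat :=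
  head 0 [seq w <- iota 1 m | T v w && (gdist T m 1 w < gdist T m 1 v)].
Definition ancestor (m : nat) (T : rel nat) (v d : nat) : nat :=
  iter (gdist T m 1 v - d) (tparent m T) v.

(* Membership in Q cap X and Q cap (H/2):  0 < y <= f(x). *)
Definition inQX (m : nat) (T : rel nat) (q : nat * nat) : bool :=
  (0 < q.2) && (q.2 <= dfsX m T q.1).
Definition inQH (m : nat) (T : rel nat) (q : nat * nat) : bool :=
  (0 < q.2) && (q.2.*2 <= height m T q.1).

Definition is_edge (a b u v : nat) : bool :=
  ((u == a) && (v == b)) || ((u == b) && (v == a)).

Definition GX (m : nat) (T : rel nat) (Q : seq (nat * nat)) : rel nat :=
  fun u v => T u v ||
    has (fun q => is_edge (dfsv m T q.1) (nth 0 (rev (dfsO m T q.1)) q.2.-1) u v)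
        [seq q <- Q | inQX m T q].

Definition GH (m : nat) (T : rel nat) (Q : seq (nat * nat)) : rel nat :=
  fun u v => T u v ||
    has (fun q => is_edge (dfsv m T q.1)
                          (ancestor m T (dfsv m T q.1) (q.2.*2 - 1)) u v)
        [seq q <- Q | inQH m T q].

Local Open Scope R_scope.

(* Real-valued max / min of a finite nonempty list (0 on the empty list). *)
Definition maxR (s : seq R) : R :=
  match s with [::] => 0 | x :: s' => foldr Rmax x s' end.
Definition minR (s : seq R) : R :=
  match s with [::] => 0 | x :: s' => foldr Rmin x s' end.

Definition is_metric (M : Type) (d : M -> M -> R) : Prop :=
  (forall x y, 0 <= d x y) /\ (forall x y, d x y = 0 <-> x = y) /\
  (forall x y, d x y = d y x) /\ (forall x y z, d x z <= d x y + d y z).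

Definition hausdorff (M : Type) (d : M -> M -> R) (A B : seq M) : R :=
  Rmax (maxR [seq minR [seq d a b | b <- B] | a <- A])
       (maxR [seq minR [seq d a b | a <- A] | b <- B]).

(* d_GH((vset m, d1, r1), (vset m, d2, r2)) <= c, i.e. the infimum over all
   metric spaces (M, delta) and isometric embeddings phi, phi' of
   max(d_H(phi X, phi' X'), delta(phi r1, phi' r2)) is at most c. *)
Definition GH_le (m : nat) (d1 d2 : nat -> nat -> R) (r1 r2 : nat) (c : R) : Prop :=
  forall eps : R, 0 < eps ->
  exists (M : Type) (delta : M -> M -> R) (phi phi' : nat -> M),
    is_metric delta /\
    (forall u v, u \in vset m -> v \in vset m -> delta (phi u) (phi v) = d1 u v) /\
    (forall u v, u \in vset m -> v \in vset m -> delta (phi' u) (phi' v) = d2 u v) /\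
    (Rmax (hausdorff delta (map phi (vset m)) (map phi' (vset m)))
          (delta (phi r1) (phi' r2)) < c + eps).

(* Main.v *)
Require Import Defs.
From Stdlib Require Import Reals Lra Lia.
From mathcomp Require Import all_boot.
Set Implicit Arguments. Unset Strict Implicit. Unset Printing Implicit Defensive.

Ltac nlia :=
  repeat match goal with H : is_true (leq _ _) |- _ =>
    move/leP: H; rewrite -?plusE -?minusE -?multE => H end;
  repeat match goal with H : @eq nat _ _ |- _ =>
    move: H; rewrite -?plusE -?minusE -?multE => H; revert H end;
  intros;
  try apply/leP; rewrite -?plusE -?minusE -?multE; lia.

Section Dist.
Variables (g : rel nat) (m : nat).
Hypothesis m_gt0 : 0 < m.

Lemma walkbP u v n : reflect (exists p : seq nat, [/\ size p = n, all (fun x => x <= m) p, path g u p & last u p = v]) (walkb g m u v n).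
Proof.
apply: (iffP existsP).
- move=> [t /andP [Hp /eqP Hl]]. exists (map val t); split => //.
  + by rewrite size_map size_tuple.
  + apply/allP => x /mapP [y _ ->]. by rewrite -ltnS ltn_ord.
- move=> [p [Hs Ha Hp Hl]]. subst n.
  exists (map_tuple (@inord m) (in_tuple p)).
  have -> : map val (map_tuple (@inord m) (in_tuple p)) = p.
    rewrite /= -map_comp -[RHS]map_id. apply/eq_in_map => x Hx /=. apply: inordK. rewrite ltnS. exact: (allP Ha).
  by rewrite Hp Hl eqxx.
Qed.

Lemma gdist_le_m u v : gdist g m u v <= m.
Proof. by rewrite /gdist -{3}(size_iota 0 m) find_size. Qed.

Lemma gdist_walk u v : gdist g m u v < m -> walkb g m u v (gdist g m u v).
Proof.
move=> H. have Hh : has (walkb g m u v) (iota 0 m) by rewrite has_find size_iota.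
have := nth_find 0 Hh. by rewrite nth_iota // add0n.
Qed.

Lemma gdist_min u v n : walkb g m u v n -> gdist g m u v <= n.
Proof.
move=> Hw. case: (ltnP n m) => Hn; last exact: leq_trans (gdist_le_m u v) Hn.
rewrite leqNgt; apply/negP => Hlt. have := before_find 0 Hlt.
by rewrite nth_iota // add0n Hw.
Qed.

Lemma gdist_path u p : all (fun x => x <= m) p -> path g u p -> gdist g m u (last u p) <= size p.
Proof. move=> Ha Hp; apply: gdist_min; apply/walkbP; by exists p. Qed.

Lemma gdist_refl u : gdist g m u u = 0.
Proof. apply/eqP; rewrite -leqn0. exact: (gdist_path (u:=u) (p:=[::])). Qed.

Lemma gdist_eq0 u v : gdist g m u v = 0 -> u = v.
Proof.
move=> H. have := gdist_walk (u:=u) (v:=v). rewrite H => /(_ m_gt0) /walkbP [p [Hs _ _ Hl]].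
by case: p Hs Hl.
Qed.

Lemma gdist_edge a b : g a b -> b <= m -> gdist g m a b <= 1.
Proof. move=> Hab Hb. apply: (gdist_path (u:=a) (p:=[:: b])) => /=; by rewrite ?Hb ?Hab. Qed.

Lemma gdist_tri u v w : gdist g m u w <= gdist g m u v + gdist g m v w.
Proof.
case: (ltnP (gdist g m u v) m) => H1; last first.
  by apply: leq_trans (gdist_le_m _ _) (leq_trans H1 (leq_addr _ _)).
case: (ltnP (gdist g m v w) m) => H2; last first.
  by apply: leq_trans (gdist_le_m _ _) (leq_trans H2 (leq_addl _ _)).
move/walkbP: (gdist_walk H1) => [p [Hs Ha Hp Hl]].
move/walkbP: (gdist_walk H2) => [q [Hs' Ha' Hq Hl']].
have := gdist_path (u:=u) (p:=p ++ q).
rewrite last_cat Hl Hl' size_cat Hs Hs' all_cat Ha Ha' cat_path Hp Hl Hq.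
by apply.
Qed.

Lemma gdist_pot (f : nat -> nat) u v : f u = 0 ->
  (forall a b, (a <= m) || (a == u) -> b <= m -> g a b -> f b <= (f a).+1) ->
  minn (f v) m <= gdist g m u v.
Proof.
move=> Hu Hl. case: (ltnP (gdist g m u v) m) => H; last by apply: leq_trans (geq_minr _ _) H.
move/walkbP: (gdist_walk H) => [p [Hs Ha Hp Hl']]. rewrite -Hs -Hl'.
apply: leq_trans (geq_minl _ _) _.
suff: forall a, (a <= m) || (a == u) -> path g a p -> all (fun x => x <= m) p ->
   f (last a p) <= f a + size p.
  by move/(_ u); rewrite eqxx orbT Hu => /(_ isT Hp Ha).
elim: {Hp Ha Hs Hl'} p => [|x p IH] a Ha /=; first by rewrite addn0.
move=> /andP [Hax Hp] /andP [Hx Hall].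
apply: leq_trans (IH x _ Hp Hall) _; first by rewrite Hx.
by rewrite addnS -addSn leq_add2r Hl.
Qed.

Lemma gdist_sym_le u v : (forall a b, g a b = g b a) -> u <= m -> v <= m ->
  gdist g m v u <= gdist g m u v.
Proof.
move=> Hs Hu Hv. have := @gdist_pot (fun w => gdist g m w u) u v.
rewrite gdist_refl => /(_ erefl).
have -> : minn (gdist g m v u) m = gdist g m v u by apply/minn_idPl/gdist_le_m.
apply=> a b Ha Hb Hab.
have Ham : a <= m by case/orP: Ha => // /eqP ->.
apply: leq_trans (gdist_tri b a u) _. rewrite addnC -addn1 leq_add2l.
apply: gdist_edge => //. by rewrite Hs.
Qed.

Lemma gdist_sym u v : (forall a b, g a b = g b a) -> u <= m -> v <= m ->
  gdist g m u v = gdist g m v u.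
Proof. move=> Hs Hu Hv; apply/eqP; rewrite eqn_leq !gdist_sym_le //. Qed.

End Dist.

Lemma gdist_mono (g g' : rel nat) m u v : 0 < m -> (forall a b, g a b -> g' a b) ->
  gdist g' m u v <= gdist g m u v.
Proof.
move=> Hm Hsub. have := @gdist_pot g m (gdist g' m u) u v.
rewrite gdist_refl // => /(_ erefl).
have -> : minn (gdist g' m u v) m = gdist g' m u v by apply/minn_idPl/gdist_le_m.
apply=> a b _ Hb Hab. apply: leq_trans (@gdist_tri g' m u a b) _.
rewrite -addn1 leq_add2l. by apply: gdist_edge; rewrite ?Hsub.
Qed.

Lemma gdist_ext (g g' : rel nat) m u v : 0 < m -> (forall a b, g a b = g' a b) ->
  gdist g m u v = gdist g' m u v.
Proof.
move=> Hm H; apply/eqP; rewrite eqn_leq !gdist_mono // => a b; by rewrite H.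
Qed.

Lemma min_lip a1 a2 b1 b2 : a1 <= b1.+1 -> a2 <= b2.+1 -> minn a1 a2 <= (minn b1 b2).+1.
Proof.
move=> H1 H2. rewrite -minnSS leq_min.
by rewrite (leq_trans (geq_minl _ _) H1) (leq_trans (geq_minr _ _) H2).
Qed.

Lemma gdist_add (g : rel nat) m x y L u v : 0 < m ->
  gdist g m x y <= L -> gdist g m y x <= L ->
  gdist g m u v <= gdist (fun a b => g a b || is_edge x y a b) m u v + L.
Proof.
move=> Hm Hxy Hyx. set d := gdist g m.
set h := fun w => minn (d u w) (minn (d u x + 1 + d y w) (d u y + 1 + d x w)).
have Hdl : forall z a b, b <= m -> g a b -> d z b <= (d z a).+1.
  move=> z a b Hb Hab. apply: leq_trans (@gdist_tri g m z a b) _.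
  by rewrite -addn1 leq_add2l gdist_edge.
have := @gdist_pot (fun a b => g a b || is_edge x y a b) m h u v.
have Hhu : h u = 0 by rewrite /h /d (@gdist_refl g m) min0n.
move=> /(_ Hhu) H.
have {H} H : minn (h v) m <= gdist (fun a b => g a b || is_edge x y a b) m u v.
  apply: H => a b _ Hb /orP [Hab|He].
  - rewrite /h. apply: min_lip; first exact: Hdl.
    apply: min_lip; rewrite -addnS leq_add2l; exact: Hdl.
  - rewrite /h /is_edge in He *.
    case/orP: He => /andP [/eqP -> /eqP ->].
    + rewrite -!minnSS !leq_min /d !(@gdist_refl g m) !addn0.
      apply/and3P; split.
      * apply: leq_trans (geq_minr _ _) _. apply: leq_trans (geq_minl _ _) _. by rewrite addn1.
      * apply: leq_trans (geq_minr _ _) _. apply: leq_trans (geq_minl _ _) _.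
        apply: leq_trans (leq_addr (d y x) _) _. exact: leqnSn.
      * apply: leq_trans (geq_minl _ _) _. rewrite addn1; apply: leqW; apply: leqnSn.
    + rewrite -!minnSS !leq_min /d !(@gdist_refl g m) !addn0.
      apply/and3P; split.
      * apply: leq_trans (geq_minr _ _) _. apply: leq_trans (geq_minr _ _) _. by rewrite addn1.
      * apply: leq_trans (geq_minl _ _) _. by rewrite -addn1 -!addnA leq_addr.
      * apply: leq_trans (geq_minr _ _) _. apply: leq_trans (geq_minr _ _) _.
        apply: leq_trans (leq_addr (d x y) _) _. exact: leqnSn.
have Hhv : d u v <= h v + L.
  rewrite /h !addn_minl !leq_min. apply/and3P; split; first exact: leq_addr.
  - apply: leq_trans (@gdist_tri g m u x v) _. rewrite -!addnA leq_add2l.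
    have Ht := @gdist_tri g m x y v. rewrite /d. clear -Hxy Ht. nlia.
  - apply: leq_trans (@gdist_tri g m u y v) _. rewrite -!addnA leq_add2l.
    have Ht := @gdist_tri g m y x v. rewrite /d. clear -Hyx Ht. nlia.
case: (leqP (h v) m) => Hh.
  apply: leq_trans Hhv _. rewrite leq_add2r. by move: H; rewrite (minn_idPl Hh).
have Hm' := @gdist_le_m g m u v. move: H; rewrite (minn_idPr (ltnW Hh)) => H.
rewrite /d. clear -Hm' H. nlia.
Qed.

Lemma foldr_minn_le (a : nat) s x : x \in s -> (foldr minn a s <= x)%N.
Proof.
elim: s => [//|y s IH]; rewrite inE => /orP [/eqP ->|H] /=; first exact: geq_minl.
exact: leq_trans (geq_minr _ _) (IH H).
Qed.

Lemma foldr_minn_in (a : nat) s : foldr minn a s \in a :: s.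
Proof.
elim: s => [|y s IH] /=; first by rewrite mem_head.
case: (leqP y (foldr minn a s)) => H.
  by rewrite !inE eqxx orbT.
move: IH; rewrite !inE => /orP [->|->] //; by rewrite !orbT.
Qed.

Section RPart.
Local Open Scope R_scope.

Lemma foldr_Rmax_init a l : a <= foldr Rmax a l.
Proof. elim: l => [|z l IH] /=; [exact: Rle_refl|exact: Rle_trans IH (Rmax_r _ _)]. Qed.

Lemma foldr_Rmax_ge a l z : List.In z l -> z <= foldr Rmax a l.
Proof.
elim: l => [//|y l IH] /= [<-|H]; first exact: Rmax_l.
exact: Rle_trans (IH H) (Rmax_r _ _).
Qed.

Lemma in_map_nat (f : nat -> R) (s : seq nat) x : (x \in s)%N -> List.In (f x) (map f s).
Proof. elim: s => [//|y s IH]; rewrite inE => /orP [/eqP ->|H] /=; [by left|by right; apply: IH]. Qed.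

Lemma maxR_ge (f : nat -> R) (s : seq nat) x : (x \in s)%N -> f x <= maxR (map f s).
Proof.
move/(in_map_nat f). case: (map f s) => [//|y l] /= [<-|H].
  exact: foldr_Rmax_init.
exact: foldr_Rmax_ge.
Qed.

Lemma maxR_le (A : Type) (f : A -> R) (s : seq A) c : 0 <= c -> (forall x, List.In x s -> f x <= c) ->
  maxR (map f s) <= c.
Proof.
case: s => [|y s] /= Hc H; first exact: Hc.
have : forall z, List.In z s -> f z <= c by move=> z Hz; apply: H; right.
have : f y <= c by apply: H; left.
elim: s {H} => [|z s IH] /= Hy Hs; first exact: Hy.
apply: Rmax_lub; first by apply: Hs; left.
apply: IH => // w Hw; apply: Hs; right; exact: Hw.
Qed.

Lemma minR_le (A : Type) (f : A -> R) (s : seq A) x : List.In x s -> minR (map f s) <= f x.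
Proof.
case: s => [//|y s] /=.
suff : f y >= foldr Rmin (f y) (map f s) /\ forall z, List.In z s -> foldr Rmin (f y) (map f s) <= f z.
  move=> [H1 H2] [<-|Hz]; [lra|exact: H2].
elim: s => [|z s [IH1 IH2]] /=; first by split => //; lra.
split; first by apply: Rle_ge; apply: Rle_trans (Rmin_r _ _) _; lra.
move=> w [<-|Hw]; first exact: Rmin_l.
apply: Rle_trans (Rmin_r _ _) (IH2 _ Hw).
Qed.

Section GHC.
Variables (m : nat) (d1 d2 : nat -> nat -> nat) (K : R).
Hypothesis m_gt0 : (0 < m)%N.
Hypothesis d1_refl : forall u, d1 u u = 0%N.
Hypothesis d2_refl : forall u, d2 u u = 0%N.
Hypothesis d1_eq0 : forall u v, d1 u v = 0%N -> u = v.
Hypothesis d2_eq0 : forall u v, d2 u v = 0%N -> u = v.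
Hypothesis d1_sym : forall u v, (u <= m)%N -> (v <= m)%N -> d1 u v = d1 v u.
Hypothesis d2_sym : forall u v, (u <= m)%N -> (v <= m)%N -> d2 u v = d2 v u.
Hypothesis d1_tri : forall u v w, (d1 u w <= d1 u v + d1 v w)%N.
Hypothesis d2_tri : forall u v w, (d2 u w <= d2 u v + d2 v w)%N.
Hypothesis H12 : forall u v, INR (d1 u v) <= INR (d2 u v) + K.
Hypothesis H21 : forall u v, INR (d2 u v) <= INR (d1 u v) + K.

Lemma tri1 u v w : INR (d1 u w) <= INR (d1 u v) + INR (d1 v w).
Proof. rewrite -plus_INR; apply: le_INR; apply/leP; rewrite plusE; exact: d1_tri. Qed.
Lemma tri2 u v w : INR (d2 u w) <= INR (d2 u v) + INR (d2 v w).
Proof. rewrite -plus_INR; apply: le_INR; apply/leP; rewrite plusE; exact: d2_tri. Qed.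

Definition cm x y := foldr minn (d1 x 0 + d2 0 y)%N [seq (d1 x z + d2 z y)%N | z <- iota 0 m.+1].

Lemma cm_le x y z : (z <= m)%N -> INR (cm x y) <= INR (d1 x z) + INR (d2 z y).
Proof.
move=> Hz. rewrite -plus_INR; apply: le_INR; apply/leP; rewrite plusE.
apply: foldr_minn_le. apply/mapP; exists z => //. by rewrite mem_iota add0n ltnS.
Qed.

Lemma cm_ex x y : exists z, (z <= m)%N /\ INR (cm x y) = INR (d1 x z) + INR (d2 z y).
Proof.
have := foldr_minn_in (d1 x 0 + d2 0 y)%N [seq (d1 x z + d2 z y)%N | z <- iota 0 m.+1].
rewrite -/(cm x y) inE => /orP [/eqP ->|/mapP [z Hz ->]].
  by exists 0%N; split => //; rewrite plus_INR.
exists z; split; last by rewrite plus_INR.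
by move: Hz; rewrite mem_iota add0n ltnS.
Qed.

Lemma K_ge0 : 0 <= K.
Proof. have := H12 0 0. rewrite d1_refl d2_refl /=. lra. Qed.

Definition MT := (bool * 'I_m.+1)%type.

Definition delta (r : R) (p q : MT) : R :=
  match p, q with
  | (false, x), (false, y) => INR (d1 x y)
  | (true, x), (true, y) => INR (d2 x y)
  | (false, x), (true, y) => r + INR (cm x y)
  | (true, x), (false, y) => r + INR (cm y x)
  end.

Lemma delta_metric r : K <= 2 * r -> 0 < r -> is_metric (delta r).
Proof.
move=> Hr Hr0.
have C0 : forall x y, 0 <= INR (cm x y) by move=> x y; apply: pos_INR.
have D10 : forall x y, 0 <= INR (d1 x y) by move=> x y; apply: pos_INR.
have D20 : forall x y, 0 <= INR (d2 x y) by move=> x y; apply: pos_INR.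
have S1 : forall x y : 'I_m.+1, d1 x y = d1 y x by move=> x y; apply: d1_sym; rewrite -ltnS ltn_ord.
have S2 : forall x y : 'I_m.+1, d2 x y = d2 y x by move=> x y; apply: d2_sym; rewrite -ltnS ltn_ord.
have ordle : forall x : 'I_m.+1, (x <= m)%N by move=> x; rewrite -ltnS ltn_ord.
split; last split; last split.
- move=> [[] x] [[] y] /=; try apply: pos_INR; have := C0 x y; have := C0 y x; lra.
- move=> [[] x] [[] y] /=; split => H.
  + by move: (INR_eq _ 0 H) => /d2_eq0 /val_inj ->.
  + by case: H => ->; rewrite d2_refl.
  + have := C0 y x; lra.
  + by [].
  + have := C0 x y; lra.
  + by [].
  + by move: (INR_eq _ 0 H) => /d1_eq0 /val_inj ->.
  + by case: H => ->; rewrite d1_refl.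
- move=> [[] x] [[] y] /=; by [rewrite S2 | | | rewrite S1].
-
  move=> [[] x] [[] y] [[] z] /=.
  + exact: tri2.
  + case: (cm_ex z y) => w [Hw E]. have := cm_le z x Hw.
    have := tri2 w y x. rewrite (S2 y x). lra.
  + case: (cm_ex y x) => w [Hw E]. case: (cm_ex y z) => w' [Hw' E'].
    have := tri2 x w z. have := tri2 w w' z. have := H21 w w'. have := tri1 w y w'.
    rewrite (d2_sym (ordle x) Hw) (d1_sym Hw (ordle y)). lra.
  + case: (cm_ex y x) => w [Hw E]. have := cm_le z x Hw.
    have := tri1 z y w. rewrite (S1 z y). lra.
  + case: (cm_ex x y) => w [Hw E]. have := cm_le x z Hw.
    have := tri2 w y z. lra.
  + case: (cm_ex x y) => w [Hw E]. case: (cm_ex z y) => w' [Hw' E'].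
    have := tri1 x w z. have := tri1 w w' z. have := H12 w w'. have := tri2 w y w'.
    rewrite (d1_sym Hw' (ordle z)) (d2_sym (ordle y) Hw'). lra.
  + case: (cm_ex y z) => w [Hw E]. have := cm_le x z Hw.
    have := tri1 x y w. lra.
  + exact: tri1.
Qed.

Lemma GH_construct eps : 0 < eps ->
  exists (M : Type) (delta : M -> M -> R) (phi phi' : nat -> M),
    is_metric delta /\
    (forall u v, u \in vset m -> v \in vset m -> delta (phi u) (phi v) = INR (d1 u v)) /\
    (forall u v, u \in vset m -> v \in vset m -> delta (phi' u) (phi' v) = INR (d2 u v)) /\
    (Rmax (hausdorff delta (map phi (vset m)) (map phi' (vset m)))
          (delta (phi 1%N) (phi' 1%N)) < K / 2 + eps).
Proof.
move=> He. have HK := K_ge0. set r := K / 2 + eps / 2.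
exists MT, (delta r), (fun u => (false, inord u)), (fun u => (true, inord u)).
have Hin : forall u, u \in vset m -> nat_of_ord (@inord m u) = u.
  by move=> u; rewrite /vset mem_iota add1n => /andP [_ Hu]; rewrite inordK.
have Hcc : forall u, u \in vset m -> delta r (false, inord u) (true, inord u) <= r.
  move=> u Hu /=. rewrite Hin //.
  have Hu' : (u <= m)%N by move: Hu; rewrite /vset mem_iota add1n ltnS => /andP [].
  have := @cm_le u u u Hu'. rewrite d1_refl d2_refl /=. lra.
have H1 : 1%N \in vset m by rewrite /vset mem_iota leqnn add1n ltnS.
split; first by apply: delta_metric; rewrite /r; lra.
split; first by move=> u v Hu Hv /=; rewrite !Hin.
split; first by move=> u v Hu Hv /=; rewrite !Hin.
have Hr0 : 0 <= r by rewrite /r; lra.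
have Hmem : forall u, List.In u (vset m) -> u \in vset m.
  move=> u; elim: (vset m) => [//|y l IH] /= [->|H]; rewrite inE ?eqxx //.
  by rewrite IH ?orbT.
apply: (Rle_lt_trans _ r); last by rewrite /r; lra.
apply: Rmax_lub; last exact: (Hcc _ H1).
rewrite /hausdorff. apply: Rmax_lub.
- apply: maxR_le => // a /List.in_map_iff [u [<- Hu]].
  apply: Rle_trans (Hcc u (Hmem _ Hu)).
  rewrite (_ : [seq delta r (false, inord u) b | b <- [seq (true, inord v) | v <- vset m]]
     = map (fun v => delta r (false, inord u) (true, inord v)) (vset m)); last by rewrite -map_comp.
  exact: (@minR_le _ (fun v => delta r (false, inord u) (true, inord v)) (vset m) u Hu).
- apply: maxR_le => // a /List.in_map_iff [u [<- Hu]].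
  apply: Rle_trans (Hcc u (Hmem _ Hu)).
  rewrite (_ : [seq delta r a0 (true, inord u) | a0 <- [seq (false, inord v) | v <- vset m]]
     = map (fun v => delta r (false, inord v) (true, inord u)) (vset m)); last by rewrite -map_comp.
  exact: (@minR_le _ (fun v => delta r (false, inord v) (true, inord u)) (vset m) u Hu).
Qed.

End GHC.

End RPart.

Section RDefs.
Local Open Scope R_scope.
Definition Mbound m T (Mx : R) := forall t, (t < m)%N ->
  Rabs (INR (dfsX m T t) - INR (height m T t) / INR 2) <= Mx.
Definition Rle42 (n : nat) (Mx : R) := INR n + 1 <= 2 * Mx + 4.

Lemma Rle42_mono n n' Mx : (n <= n')%N -> Rle42 n' Mx -> Rle42 n Mx.
Proof. move=> H; rewrite /Rle42. have := le_INR n n' (elimT leP H). lra. Qed.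

Lemma key_real D X0 X1 dw Mx :
  Rabs (INR X0 - INR dw / INR 2) <= Mx ->
  Rabs (INR X1 - INR dw.+1 / INR 2) <= Mx ->
  (D.+1 + dw.+1 <= X1.*2 + 3)%N \/ (D.+1 + X0.*2 <= dw)%N ->
  Rle42 D.+1 Mx.
Proof.
move=> H0 H1 K. rewrite /Rle42.
have E2 : INR 2 = 2 by [].
have A1 := Rle_abs (INR X1 - INR dw.+1 / INR 2).
have A0 := Rle_abs (- (INR X0 - INR dw / INR 2)). rewrite Rabs_Ropp in A0.
rewrite E2 in H0 H1 A0 A1. rewrite S_INR in H1 A1.
case: K => /leP K; have := le_INR _ _ K; rewrite -?plusE -?multE -!mul2n ?plus_INR ?mult_INR ?S_INR ?E2 /=; lra.
Qed.
End RDefs.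

Section Tree.
Variables (m : nat) (T : rel nat).
Hypothesis m_gt0 : 0 < m.
Hypothesis Htree : is_tree m T.

Local Notation dep := (gdist T m 1).
Local Notation par := (tparent m T).

Lemma Tsym u v : T u v = T v u. Proof. by case: Htree. Qed.
Lemma Tirr u : ~~ T u u. Proof. by case: Htree. Qed.
Lemma Trange u v : T u v -> (0 < u <= m) && (0 < v <= m). Proof. case: Htree => _ _ H _ _; exact: H. Qed.
Lemma T0 v : T 0 v = false. Proof. by apply/negP => /Trange. Qed.

Lemma path_range a p : path T a p -> all (fun x => 0 < x <= m) p.
Proof.
elim: p a => [|x p IH] a //= /andP [Hax Hp]. rewrite (IH x Hp) andbT.
by case/andP: (Trange Hax).
Qed.

Lemma dep_lt u : 0 < u <= m -> dep u < m.
Proof.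
move=> Hu. case: Htree => _ _ _ Hc _.
have [p /andP [Hp /eqP Hl]] := Hc u Hu.
case: (shortenP Hp) Hl => p' Hp' Hu' Hsub Hl'.
have Hr := path_range Hp.
have Hsz : size (1 :: p') <= m.
  rewrite -(size_iota 1 m); apply: uniq_leq_size => // x.
  rewrite inE mem_iota => /orP [/eqP ->|Hx]; first by rewrite leqnn add1n ltnS.
  have := allP Hr x (Hsub x Hx). by rewrite add1n ltnS.
apply: leq_ltn_trans Hsz. rewrite -Hl'.
apply: gdist_path => //. apply/allP => x Hx. by case/andP: (allP Hr x (Hsub x Hx)).
Qed.

Lemma dep1 : dep 1 = 0. Proof. exact: gdist_refl. Qed.
Lemma dep0 u : dep u = 0 -> u = 1. Proof. by move/(gdist_eq0 m_gt0). Qed.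

Lemma dep_lip a b : T a b -> dep b <= (dep a).+1.
Proof.
move=> Hab. apply: leq_trans (@gdist_tri T m 1 a b) _. rewrite -[(dep a).+1]addn1 leq_add2l.
apply: gdist_edge => //. by case/andP: (Trange Hab) => _ /andP [].
Qed.

Lemma par1 : par 1 = 0.
Proof.
rewrite /tparent dep1. by rewrite (eq_filter (a2 := pred0)) ?filter_pred0 // => w; rewrite ltn0 andbF.
Qed.
Lemma par0 : par 0 = 0.
Proof. by rewrite /tparent (eq_filter (a2 := pred0)) ?filter_pred0 // => w; rewrite T0. Qed.

Lemma par_spec u : 0 < u <= m -> u != 1 ->
  [/\ 0 < par u <= m, T u (par u) & (dep (par u)).+1 = dep u].
Proof.
move=> Hu Hu1. have Hd := dep_lt Hu.
move/walkbP: (gdist_walk Hd) => [p [Hs Ha Hp Hl]].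
move: Hs Ha Hp Hl. case/lastP: p => [|p0 x].
  by move=> _ _ _ /= H; rewrite H eqxx in Hu1.
rewrite last_rcons size_rcons all_rcons rcons_path => Hs /andP [_ Ha] /andP [Hp Hw] Hx.
subst x. set w := last 1 p0 in Hw.
have Hdw : dep w < dep u by rewrite -Hs ltnS gdist_path.
have Hf : w \in [seq z <- iota 1 m | T u z && (dep z < dep u)].
  rewrite mem_filter Tsym Hw Hdw mem_iota add1n ltnS /=. by case/andP: (Trange Hw).
rewrite /tparent. move: Hf. case E: [seq z <- iota 1 m | _] => [|y s] //= _.
have : y \in [seq z <- iota 1 m | T u z && (dep z < dep u)] by rewrite E mem_head.
rewrite mem_filter mem_iota add1n ltnS => /andP [/andP [Huy Hy] Hym].
split => //. apply/eqP; rewrite eqn_leq Hy. rewrite Tsym in Huy. exact: dep_lip Huy.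
Qed.

Definition Epairs := [seq e <- [seq (u, v) | u <- vset m, v <- vset m] | (e.1 < e.2) && T e.1 e.2].
Definition pe z := (minn (par z) z, maxn (par z) z).
Definition key (e : nat * nat) := if dep e.1 < dep e.2 then e.2 else e.1.

Lemma iota2 z : (z \in iota 2 m.-1) = (0 < z <= m) && (z != 1).
Proof.
rewrite mem_iota. have -> : 2 + m.-1 = m.+1 by rewrite add2n prednK.
case: z => [|[|z]] //=; by rewrite ?andbF ?andbT.
Qed.

Lemma key_pe z : 0 < z <= m -> z != 1 -> key (pe z) = z.
Proof.
move=> Hz Hz1. case: (par_spec Hz Hz1) => _ _ Hd.
rewrite /key /pe /=. case: (leqP (par z) z) => H.
  by rewrite -Hd ltnSn.
by rewrite -Hd ltnNge leqnSn.
Qed.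

Lemma pe_in z : 0 < z <= m -> z != 1 -> pe z \in Epairs.
Proof.
move=> Hz Hz1. case: (par_spec Hz Hz1) => Hp HT Hd.
have Hne : par z != z by apply/eqP => E; move: Hd; rewrite E => /eqP; rewrite eqn_leq ltnn.
rewrite /Epairs /pe mem_filter /=. apply/andP; split.
  case: (ltngtP (par z) z) => H.
  - by rewrite H Tsym.
  - by rewrite H.
  - by rewrite H eqxx in Hne.
apply/allpairsP. exists (minn (par z) z, maxn (par z) z) => /=; split => //.
  by rewrite /vset mem_iota add1n ltnS; case: (leqP (par z) z) => H;
    rewrite ?(minn_idPl H) ?(minn_idPr (ltnW H)).
by rewrite /vset mem_iota add1n ltnS; case: (leqP (par z) z) => H;
    rewrite ?(maxn_idPl H) ?(maxn_idPr (ltnW H)).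
Qed.

Lemma Epairs_uniq : uniq Epairs.
Proof.
apply: filter_uniq. apply: allpairs_uniq; rewrite ?iota_uniq //.
by move=> [a b] [c d] _ _ /=.
Qed.

Lemma edge_cases x y : T x y -> (x = par y /\ y != 1) \/ (y = par x /\ x != 1).
Proof.
move=> Hxy. case/andP: (Trange Hxy) => Hx Hy.
have [e [He Hkey Hsum]] : exists e, [/\ e \in Epairs, key e = x \/ key e = y & e.1 + e.2 = x + y].
  case: (ltngtP x y) => H.
  - exists (x, y); split => //=; last by rewrite /key; case: ifP; auto.
    rewrite mem_filter /= H Hxy /=. apply/allpairsP; exists (x, y) => /=.
    by rewrite /vset !mem_iota !add1n !ltnS Hx Hy.
  - exists (y, x); split => /=; last by rewrite addnC.
    + rewrite mem_filter /= H Tsym Hxy /=. apply/allpairsP; exists (y, x) => /=.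
      by rewrite /vset !mem_iota !add1n !ltnS Hx Hy.
    + by rewrite /key; case: ifP; auto.
  - by subst y; rewrite (negbTE (Tirr x)) in Hxy.
have Hin : e \in map pe (iota 2 m.-1).
  apply/negPn/negP => Hn.
  have Hu : uniq (e :: map pe (iota 2 m.-1)).
    rewrite /= Hn /= map_inj_in_uniq ?iota_uniq // => a b Ha Hb Hab.
    move: Ha Hb; rewrite !iota2 => /andP [Ha Ha1] /andP [Hb Hb1].
    by rewrite -(key_pe Ha Ha1) Hab key_pe.
  have Hs : {subset e :: map pe (iota 2 m.-1) <= Epairs}.
    move=> z; rewrite inE => /orP [/eqP -> //|/mapP [w Hw ->]].
    move: Hw; rewrite iota2 => /andP [Hw Hw1]. exact: pe_in.
  have := uniq_leq_size Hu Hs. case: Htree => _ _ _ _ ->.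
  by rewrite /= size_map size_iota ltnn.
case/mapP: Hin => z; rewrite iota2 => /andP [Hz Hz1] Ez.
have Hk := key_pe Hz Hz1. rewrite -Ez in Hk.
have Hs2 : par z + z = x + y by rewrite -Hsum Ez /pe /= addn_min_max.
case: Hkey => Ezx; rewrite Ezx in Hk; subst z.
- right; split => //. move: Hs2; rewrite -!plusE; lia.
- left; split => //. move: Hs2; rewrite -!plusE; lia.
Qed.


Lemma child_of v w : T v w -> ~ (w = par v /\ v != 1) ->
  [/\ par w = v, dep w = (dep v).+1, 0 < w <= m & w != 1].
Proof.
move=> Hvw Hn. case/andP: (Trange Hvw) => Hv Hw.
case: (edge_cases Hvw) => [[E Hw1]|[E Hv1]]; last by exfalso; apply: Hn.
case: (par_spec Hw Hw1) => _ _ Hd. by rewrite E Hd.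
Qed.

Lemma iter_par x s : 0 < x <= m -> s <= dep x ->
  0 < iter s par x <= m /\ dep (iter s par x) = dep x - s.
Proof.
move=> Hx. elim: s => [|s IH] Hs; first by rewrite subn0.
case: (IH (ltnW Hs)) => Hy Hdy. rewrite iterS.
have Hy1 : iter s par x != 1.
  apply/eqP => E. move: Hdy; rewrite E dep1 => /esym/eqP. by rewrite subn_eq0 leqNgt Hs.
case: (par_spec Hy Hy1) => Hp _ Hd. split => //.
move: Hd; rewrite Hdy => Hd. apply/eqP; rewrite -eqSS Hd. apply/eqP. nlia.
Qed.

Lemma iter_par_big x k : 0 < x <= m -> iter (dep x + k.+1) par x = 0.
Proof.
move=> Hx. elim: k => [|k IH]; last by rewrite addnS iterS IH par0.
rewrite addn1 iterS. case: (iter_par Hx (leqnn (dep x))) => Hy. rewrite subnn => /dep0 ->.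
exact: par1.
Qed.



Lemma anc_le x s : 0 < x <= m -> 0 < iter s par x -> s <= dep x.
Proof.
move=> Hx Hp. rewrite leqNgt; apply/negP => Hs.
have E : s = dep x + (s - (dep x).+1).+1 by rewrite addnS -addSn subnKC.
by move: Hp; rewrite E iter_par_big.
Qed.

Lemma anc_cmp x s s' : 0 < x <= m -> 0 < iter s par x -> 0 < iter s' par x ->
  dep (iter s par x) <= dep (iter s' par x) -> exists s'', iter s'' par (iter s' par x) = iter s par x.
Proof.
move=> Hx Hp Hp' Hd. have Hs := anc_le Hx Hp. have Hs' := anc_le Hx Hp'.
case: (iter_par Hx Hs) => _ E. case: (iter_par Hx Hs') => _ E'.
rewrite E E' in Hd.
exists (s - s'). rewrite -iterD subnK //. nlia.
Qed.

Lemma iter_dist x s1 s2 : 0 < x <= m -> s1 <= s2 -> s2 <= dep x ->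
  gdist T m (iter s1 par x) (iter s2 par x) <= s2 - s1 /\
  gdist T m (iter s2 par x) (iter s1 par x) <= s2 - s1.
Proof.
move=> Hx H12. elim: s2 H12 => [|s2 IH] H12 Hs2.
  by move: H12; rewrite leqn0 => /eqP ->; rewrite gdist_refl.
case: (ltngtP s1 s2.+1) => H; last 2 first.
- by move: H12; rewrite leqNgt H.
- by rewrite H subnn !gdist_refl.
case: (IH H (ltnW Hs2)) => D1 D2.
case: (iter_par Hx (ltnW Hs2)) => Hy Hdy.
have Hy1 : iter s2 par x != 1.
  apply/eqP => E. move: Hdy; rewrite E dep1 => /esym/eqP. by rewrite subn_eq0 leqNgt Hs2.
case: (par_spec Hy Hy1) => Hp HT _.
rewrite iterS. split.
- apply: leq_trans (@gdist_tri T m _ (iter s2 par x) _) _.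
  have He : gdist T m (iter s2 par x) (par (iter s2 par x)) <= 1 by apply: gdist_edge HT _; case/andP: Hp. clear -D1 He H. nlia.
- apply: leq_trans (@gdist_tri T m _ (iter s2 par x) _) _.
  have : gdist T m (par (iter s2 par x)) (iter s2 par x) <= 1.
    apply: gdist_edge; first by rewrite Tsym. by case/andP: Hy.
  move=> He. clear -D2 He H. nlia.
Qed.

Local Notation O i := (dfsO m T i).
Local Notation A i := (dfs_state m T i).2.
Local Notation vv i := (dfsv m T i).

Lemma dfsO_S i : O i.+1 = nbrs m T (vv i) (O i) (A i) ++ behead (O i).
Proof. rewrite /dfsv /dfsO /dfs_state iterS. by case: (iter i _ _). Qed.

Lemma dfsA_S i : A i.+1 = vv i :: A i.
Proof. rewrite /dfsv /dfsO /dfs_state iterS. by case: (iter i _ _). Qed.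

Lemma vvA t i : t < i -> vv t \in A i.
Proof.
elim: i => [//|i IH]. rewrite ltnS leq_eqVlt => /orP [/eqP ->|H].
  by rewrite dfsA_S mem_head.
by rewrite dfsA_S inE IH ?orbT.
Qed.

Lemma vv_head i : vv i = head 0 (O i). Proof. by []. Qed.

Lemma O_nil i : O i = [::] -> O i.+1 = [::].
Proof.
move=> E. rewrite dfsO_S E /= cats0 /nbrs /dfsv E /=.
by rewrite (eq_filter (a2 := pred0)) ?filter_pred0 // => w; rewrite T0.
Qed.

Lemma O0 : O 0 = [:: 1]. Proof. by []. Qed.
Lemma A0 : A 0 = [::]. Proof. by []. Qed.

Lemma nbrs_child i w : w \in nbrs m T (vv i) (O i) (A i) ->
  (vv i = 1 \/ par (vv i) \in A i) ->
  [/\ par w = vv i, dep w = (dep (vv i)).+1, 0 < w <= m & w != 1].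
Proof.
rewrite /nbrs mem_filter => /andP [/andP [/andP [HT HA] _] _] Hp.
apply: child_of => // [[E Hv1]]. case: Hp => [Hv|Hp].
  by rewrite Hv eqxx in Hv1.
by rewrite E Hp in HA.
Qed.

Definition Inv i :=
  [/\ all (fun x => 0 < x <= m) (O i),
      pairwise leq (map dep (rev (O i))) &
      forall k, k < size (O i) ->
        exists t, [/\ t < i, par (nth 0 (rev (O i)) k) = vv t,
          dep (nth 0 (rev (O i)) k) = (dep (vv t)).+1,
          (size (O t)).-1 <= k <= (size (O t.+1)).-1 &
          dep (vv t.+1) = (dep (vv t)).+1 /\
          exists s, iter s par (vv i) = vv t]].

Lemma pairwise_const (s : seq nat) c : all (pred1 c) s -> pairwise leq s.
Proof.
elim: s => [//|x s IH] /= /andP [/eqP -> Hs]. rewrite IH // andbT.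
apply/allP => y Hy. by rewrite (eqP (allP Hs y Hy)).
Qed.


Lemma par_pos r : 0 < r <= m -> r != 1 -> 0 < par r.
Proof. by move=> H1 H2; case: (par_spec H1 H2) => /andP []. Qed.

Lemma dep_ne1 r d : dep r = d.+1 -> r != 1.
Proof. by move=> H; apply/eqP => E; rewrite E dep1 in H. Qed.

Lemma O_ne i : O i.+1 != [::] -> O i != [::].
Proof. by apply: contra => /eqP /O_nil ->. Qed.

Lemma inv_step i : (i = 0 \/ (0 < i /\ Inv i)) -> O i.+1 != [::] -> Inv i.+1.
Proof.
move=> Hpre Hne.
have := O_ne Hne. case EO: (O i) => [//|v rest] _.
have Hv : vv i = v by rewrite /dfsv EO.
have [F1 F2 F3 F4] : [/\ all (fun x => 0 < x <= m) (v :: rest),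
   pairwise leq (map dep (rev rest ++ [:: v])),
   (forall k, k < size rest -> exists t, [/\ t < i, par (nth 0 (rev rest) k) = vv t,
          dep (nth 0 (rev rest) k) = (dep (vv t)).+1,
          (size (O t)).-1 <= k <= (size (O t.+1)).-1 &
          dep (vv t.+1) = (dep (vv t)).+1 /\
          exists s, iter s par v = vv t]) &
   v = 1 \/ par v \in A i].
  case: Hpre => [Hi|[Hi HI]].
    subst i. move: EO; rewrite O0 => -[<- <-] /=. by split; rewrite ?m_gt0 //; left.
  case: HI => I1 I2 I3.
  move: I1 I2 I3; rewrite EO rev_cons -cats1 Hv => I1 I2 I3.
  split => //.
  - move=> k Hk. have Hk' : k < size (v :: rest) by rewrite /= ltnS ltnW.
    case: (I3 k Hk') => t [T1 T2 T3 T4 T5]. exists t.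
    by rewrite nth_cat size_rev Hk in T2 T3 *.
  - right. have Hk' : size rest < size (v :: rest) by [].
    case: (I3 _ Hk') => t [T1 T2 _ _ _].
    rewrite nth_cat size_rev ltnn subnn /= in T2. rewrite T2. exact: vvA.
have HN : forall w, w \in nbrs m T v (v :: rest) (A i) ->
    [/\ par w = v, dep w = (dep v).+1, 0 < w <= m & w != 1].
  move=> w Hw. have := @nbrs_child i w. rewrite Hv EO. by apply.
have HOS : O i.+1 = nbrs m T v (v :: rest) (A i) ++ rest by rewrite dfsO_S EO Hv.
set N := nbrs m T v (v :: rest) (A i) in HN HOS.
have Hvr : 0 < v <= m by case/andP: F1.
have Hrr : all (fun x => 0 < x <= m) rest by case/andP: F1.
have OLD : forall k, k < size rest -> exists t s,
    [/\ par (nth 0 (rev rest) k) = vv t, 0 < vv t <= m, iter s par v = vv t &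
        dep (vv t) <= dep v].
  move=> k Hk. case: (F3 k Hk) => t [_ T2 T3 _ [_ [s Hs]]].
  have Hr : 0 < nth 0 (rev rest) k <= m.
    apply: (allP Hrr). by rewrite -mem_rev mem_nth // size_rev.
  have Hr1 := dep_ne1 T3.
  case: (par_spec Hr Hr1) => Hp _ _. rewrite T2 in Hp.
  exists t, s; split => //.
  have Hsl : s <= dep v by apply: anc_le => //; rewrite Hs; case/andP: Hp.
  case: (iter_par Hvr Hsl) => _. rewrite Hs => ->. exact: leq_subr.
have Hsz : (size (O i)).-1 = size rest by rewrite EO.
rewrite /Inv HOS rev_cat map_cat.
case EN: N HN HOS => [|w0 N'] HN HOS.
-
  have E0 : rev (@nil nat) = [::] by [].
  rewrite E0 /= in HOS *. rewrite !cats0. split => //.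
  + by move: F2; rewrite map_cat pairwise_cat => /and3P [].
  + move=> k Hk. case: (F3 k Hk) => t [T1 T2 T3 T4 [T5 [s Hs]]].
    exists t; split => //; first exact: ltnW.
    split => //.
    have Hrest : rest != [::] by rewrite -HOS.
    set k0 := (size rest).-1.
    have Hk0 : k0 < size rest by rewrite /k0 prednK // lt0n size_eq0.
    have Hvh : vv i.+1 = nth 0 (rev rest) k0.
      rewrite nth_rev // /k0 prednK ?lt0n ?size_eq0 // subnn /dfsv HOS.
      by case: (rest) Hrest.
    case: (OLD k Hk) => t1 [s1 [P1 P2 P3 P4]].
    case: (OLD k0 Hk0) => t2 [s2 [Q1 Q2 Q3 Q4]].
    have Hdd : dep (vv t1) <= dep (vv t2).
      case: (F3 k Hk) => t1' [_ R2 R3 _ _]. case: (F3 k0 Hk0) => t2' [_ S2 S3 _ _].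
      rewrite -P1 -Q1. 
      have Hpw : dep (nth 0 (rev rest) k) <= dep (nth 0 (rev rest) k0).
        have Hkk : k <= k0 by rewrite /k0 -ltnS prednK // lt0n size_eq0.
        move: Hkk; rewrite leq_eqVlt => /orP [/eqP -> //|Hlt].
        move: F2; rewrite map_cat pairwise_cat => /and3P [_ /(pairwiseP 0) Hpw _].
        have := Hpw k k0; rewrite !(nth_map 0) ?size_rev //; apply => //;
          by rewrite inE size_map size_rev.
      case: (F3 k Hk) => ? [_ U2 U3 _ _]. case: (F3 k0 Hk0) => ? [_ V2 V3 _ _].
      move: Hpw; rewrite U3 V3 U2 V2 ltnS.
      by [].
    have Hts : vv t = vv t1 by rewrite -T2 -P1.
    rewrite Hts.
    case: (anc_cmp (s := s1) (s' := s2) Hvr) => [|||s'' Hs''].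
    * by rewrite P3; case/andP: P2.
    * by rewrite Q3; case/andP: Q2.
    * by rewrite P3 Q3.
    exists s''.+1. rewrite iterSr Hvh Q1. by rewrite Q3 P3 in Hs''.
-
  have Hw0 := HN w0 (mem_head _ _). case: Hw0 => W1 W2 W3 W4.
  have Hvv1 : vv i.+1 = w0 by rewrite /dfsv HOS.
  split.
  + rewrite all_cat Hrr andbT. apply/allP => w Hw. by case: (HN w Hw).
  + rewrite pairwise_cat. apply/and3P; split.
    * apply/allrelP => x y /mapP [r Hr ->] /mapP [w Hw ->].
      rewrite mem_rev in Hw. case: (HN w Hw) => _ -> _ _.
      have Hk : index r (rev rest) < size rest by rewrite -size_rev index_mem.
      have Hnr := nth_index 0 Hr.
      case: (OLD _ Hk) => t [s [P1 P2 P3 P4]].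
      case: (F3 _ Hk) => t' [_ U2 U3 _ _]. rewrite Hnr in U2 U3.
      rewrite U3 ltnS -U2. rewrite Hnr in P1. by rewrite P1.
    * move: F2; rewrite map_cat pairwise_cat. by case/and3P.
    * apply: (pairwise_const (c := (dep v).+1)). apply/allP => x /mapP [w Hw ->].
      rewrite mem_rev in Hw. case: (HN w Hw) => _ Hd _ _. by rewrite /= Hd.
  + move=> k Hk0. have Hk : k < size rest + size (w0 :: N') by move: Hk0; rewrite size_cat addnC.
    rewrite nth_cat size_rev. case: ifP => Hkr.
    * case: (F3 k Hkr) => t [T1 T2 T3 T4 [T5 [s Hs]]].
      exists t; split => //; first exact: ltnW.
      split => //. exists s.+1. by rewrite iterSr Hvv1 W1.
    * have Hin : nth 0 (rev (w0 :: N')) (k - size rest) \in (w0 :: N').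
        rewrite -mem_rev mem_nth // size_rev. move/negbT: Hkr; rewrite -leqNgt => Hkr.
        by rewrite ltn_subLR.
      case: (HN _ Hin) => X1 X2 _ _.
      exists i; split => //; rewrite ?Hv //.
      -- rewrite Hsz HOS. move/negbT: Hkr; rewrite -leqNgt => H1. rewrite H1 /=.
         move: Hk0; rewrite size_cat /=. rewrite size_cat. clear => H. nlia.
      -- split; first by rewrite Hvv1 W2 ?Hv.
         exists 1. by rewrite /= Hvv1 W1 ?Hv.
Qed.

Lemma inv_all i : 0 < i -> O i != [::] -> Inv i.
Proof.
elim: i => [//|i IH] _ Hne.
case: i IH Hne => [|i] IH Hne; first by apply: inv_step; [left|].
apply: inv_step => //. right; split => //. apply: IH => //. exact: O_ne.
Qed.


Lemma q_bound i j (Mx : R) : inQX m T (i, j) -> inQH m T (i, j) -> Mbound m T Mx ->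
  let a := nth 0 (rev (O i)) j.-1 in
  let b := ancestor m T (vv i) (j.*2 - 1) in
  [/\ vv i <= m, a <= m, b <= m, Rle42 (gdist T m a b) Mx & Rle42 (gdist T m b a) Mx].
Proof.
move=> /andP [Hj0 HjX] /andP [_ HjH] HM a b. rewrite /= in Hj0 HjX HjH.
have Him : i < m by move: HjX; rewrite /dfsX; case: ifP => // _; rewrite leqNgt Hj0.
have HX : dfsX m T i = (size (O i)).-1 by rewrite /dfsX Him.
have HH : height m T i = dep (vv i) by rewrite /height Him.
have Hi0 : 0 < i.
  rewrite lt0n; apply/negP => /eqP Ei. move: HjX; rewrite HX Ei O0 /=. by rewrite leqNgt Hj0.
have Hne : O i != [::] by move: HjX; rewrite HX; case: (O i) => //=; rewrite leqNgt Hj0.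
case: (inv_all Hi0 Hne) => I1 I2 I3.
have Hk : j.-1 < size (O i).
  move: HjX; rewrite HX; case: (size (O i)) => [|n] /=; first by rewrite leqNgt Hj0.
  move=> H; rewrite ltnS; exact: leq_trans (leq_pred j) H.
case: (I3 _ Hk) => t [T1 T2 T3 T4 [T5 [s Hs]]].
have Ha : 0 < a <= m by apply: (allP I1); rewrite -mem_rev mem_nth // size_rev.
have Hvi : 0 < vv i <= m by apply: (allP I1); rewrite /dfsv; case: (O i) Hne => //= x l _; rewrite mem_head.
have Ha1 := dep_ne1 T3.
case: (par_spec Ha Ha1); rewrite -/a T2 => Hw HTaw _.
have Hsl : s <= dep (vv i) by apply: anc_le => //; rewrite Hs; case/andP: Hw.
case: (iter_par Hvi Hsl); rewrite Hs => _ Hdw.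
set sb := dep (vv i) - (j.*2 - 1).
have Hsb : sb <= dep (vv i) by exact: leq_subr.
have Hb : b = iter sb par (vv i) by [].
case: (iter_par Hvi Hsb); rewrite -Hb => Hbr _.
have Haw : gdist T m a (vv t) <= 1 by apply: gdist_edge => //; case/andP: Hw.
have Hwa : gdist T m (vv t) a <= 1 by apply: gdist_edge; [rewrite Tsym|case/andP: Ha].
set D := (s - sb) + (sb - s).
have [Hwb Hbw] : gdist T m (vv t) b <= D /\ gdist T m b (vv t) <= D.
  rewrite -Hs Hb /D. case: (leqP s sb) => H.
  - case: (iter_dist Hvi H Hsb) => H1 H2. split; [apply: leq_trans H1 _|apply: leq_trans H2 _]; exact: leq_addl.
  - case: (iter_dist Hvi (ltnW H) Hsl) => H1 H2. split; [apply: leq_trans H2 _|apply: leq_trans H1 _]; exact: leq_addr.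
have Hab : gdist T m a b <= D.+1.
  apply: leq_trans (@gdist_tri T m a (vv t) b) _. rewrite -addn1 addnC leq_add //.
have Hba : gdist T m b a <= D.+1.
  apply: leq_trans (@gdist_tri T m b (vv t) a) _. rewrite -addn1 leq_add //.
have Ht : t < m by apply: ltn_trans T1 Him.
have Ht1 : t.+1 < m by apply: leq_ltn_trans T1 Him.
have HXt : dfsX m T t = (size (O t)).-1 by rewrite /dfsX Ht.
have HXt1 : dfsX m T t.+1 = (size (O t.+1)).-1 by rewrite /dfsX Ht1.
have HHt : height m T t = dep (vv t) by rewrite /height Ht.
have HHt1 : height m T t.+1 = (dep (vv t)).+1 by rewrite /height Ht1 T5.
have HM0 := HM t Ht. have HM1 := HM t.+1 Ht1.
rewrite HXt HHt in HM0. rewrite HXt1 HHt1 in HM1.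
move: T4 => /andP [T4a T4b].
have Key : (D.+1 + (dep (vv t)).+1 <= ((size (O t.+1)).-1).*2 + 3) \/
           (D.+1 + ((size (O t)).-1).*2 <= dep (vv t)).
  move: HjH; rewrite HH => HjH. rewrite /D /sb. rewrite -!muln2.
  move: Hdw HjH Hsl T4a T4b Hj0. clear. set X0 := (size (O t)).-1. set X1 := (size (O t.+1)).-1.
  set dv := dep (vv i). set dw := dep (vv t).
  move=> Hdw HjH Hsl T4a T4b Hj0.
  case: (leqP dw (j * 2 - 1)) => Hc; [left|right]; move: HjH T4a T4b; rewrite -?muln2 -?subn1 => HjH T4a T4b; nlia.
have HD := key_real HM0 HM1 Key.
split; [by case/andP: Hvi|by case/andP: Ha|by case/andP: Hbr| |]; exact: Rle42_mono HD.
Qed.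

End Tree.

Section Swap.
Local Open Scope R_scope.

Lemma swap_all (m : nat) (T C : rel nat) (s : seq (nat * nat)) (x ya yb : nat * nat -> nat) (Mx : R) :
  (0 < m)%N -> (forall a b, T a b -> C a b) ->
  (forall q, q \in s -> [/\ (x q <= m)%N, (ya q <= m)%N, (yb q <= m)%N,
        Rle42 (gdist T m (ya q) (yb q)) Mx & Rle42 (gdist T m (yb q) (ya q)) Mx]) ->
  forall u v, INR (gdist (fun a b => C a b || has (fun q => is_edge (x q) (ya q) a b) s) m u v)
     <= INR (gdist (fun a b => C a b || has (fun q => is_edge (x q) (yb q) a b) s) m u v)
        + INR (size s) * (2 * Mx + 4).
Proof.
move=> Hm. elim: s C => [|q s IH] C HC Hq u v.
  rewrite (@gdist_ext _ (fun a b => C a b || has (fun q => is_edge (x q) (yb q) a b) [::])) //=.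
  lra.
have [Hx Hya Hyb R1 R2] := Hq q (mem_head _ _).
have Hq' := fun q' (H : q' \in s) => Hq q' (@mem_behead _ (q :: s) q' H).
set Cx := fun a b => C a b || is_edge (x q) (ya q) a b.
have := IH Cx (fun a b H => introT orP (or_introl (HC a b H))) Hq' u v.
set G := fun a b => C a b || has (fun q => is_edge (x q) (yb q) a b) s.
set G' := fun a b => G a b || is_edge (x q) (ya q) a b.
rewrite (@gdist_ext (fun a b => Cx a b || has (fun q => is_edge (x q) (ya q) a b) s)
   (fun a b => C a b || has (fun q => is_edge (x q) (ya q) a b) (q :: s))); last first.
  - by move=> a b; rewrite /Cx /= orbA.
  - done.
rewrite (@gdist_ext (fun a b => Cx a b || has (fun q => is_edge (x q) (yb q) a b) s) G'); last first.
  - by move=> a b; rewrite /Cx /G' /G orbAC.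
  - done.
move=> H1.
have HTG' : forall a b, T a b -> G' a b by move=> a b H; rewrite /G' /G HC.
have E1 : (gdist G' m (x q) (yb q) <= (gdist T m (ya q) (yb q)).+1)%N.
  apply: leq_trans (@gdist_tri G' m _ (ya q) _) _. rewrite -addn1 addnC leq_add //.
    exact: gdist_mono.
  by apply: gdist_edge => //; rewrite /G' /is_edge !eqxx orbT.
have E2 : (gdist G' m (yb q) (x q) <= (gdist T m (yb q) (ya q)).+1)%N.
  apply: leq_trans (@gdist_tri G' m _ (ya q) _) _. rewrite -addn1 leq_add //.
    exact: gdist_mono.
  by apply: gdist_edge => //; rewrite /G' /is_edge !eqxx !orbT.
set L := maxn (gdist T m (ya q) (yb q)).+1 (gdist T m (yb q) (ya q)).+1.
have H2 := gdist_add (x := x q) (y := yb q) (L := L) u v Hm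
  (leq_trans E1 (leq_maxl _ _)) (leq_trans E2 (leq_maxr _ _)).
have H3 : (gdist (fun a b => G' a b || is_edge (x q) (yb q) a b) m u v <=
           gdist (fun a b => C a b || has (fun q => is_edge (x q) (yb q) a b) (q :: s)) m u v)%N.
  apply: gdist_mono => // a b /=. rewrite /G' /G.
  by case: (C a b) => //=; case: (is_edge _ _ a b); rewrite ?orbT //= => ->; rewrite ?orbT.
have HL : INR L <= 2 * Mx + 4.
  rewrite /L. case: (leqP (gdist T m (ya q) (yb q)).+1 (gdist T m (yb q) (ya q)).+1) => H.
  - rewrite S_INR. move: R2; rewrite /Rle42. lra.
  - rewrite S_INR. move: R1; rewrite /Rle42. lra.
have H4 := le_INR _ _ (elimT leP (leq_trans H2 (leq_add H3 (leqnn L)))).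
rewrite plus_INR in H4.
have -> : size (q :: s) = (size s).+1 by [].
rewrite S_INR. have := pos_INR (size s). nra.
Qed.
End Swap.


Section Half.
Local Open Scope R_scope.
Lemma half_eq k Mx : INR k * (2 * Mx + 4) / 2 = INR k * (Mx + INR 2).
Proof. rewrite (_ : INR 2 = 2) //. field. Qed.
End Half.

Lemma edge_sym a b u v : is_edge a b u v = is_edge a b v u.
Proof. rewrite /is_edge. by rewrite orbC andbC [(v == b) && _]andbC. Qed.

Theorem lemma13 (m : nat) (T : rel nat) (Q : seq (nat * nat)) :
  0 < m -> is_tree m T -> uniq Q ->
  [seq q <- Q | inQX m T q] = [seq q <- Q | inQH m T q] ->
  GH_le m (fun u v => INR (gdist (GX m T Q) m u v))
          (fun u v => INR (gdist (GH m T Q) m u v)) 1 1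
    (Rmult (INR (size [seq q <- Q | inQX m T q]))
       (Rplus (maxR [seq Rabs (Rminus (INR (dfsX m T i)) (Rdiv (INR (height m T i)) (INR 2)))
                    | i <- iota 0 m])
              (INR 2))).
Proof.
move=> Hm Htree _ Hfilt.
set s := [seq q <- Q | inQX m T q].
set Mx := maxR _.
have HM : Mbound m T Mx.
  move=> t Ht. apply: (@maxR_ge (fun i => Rabs (Rminus (INR (dfsX m T i)) (Rdiv (INR (height m T i)) (INR 2)))) (iota 0 m) t).
  by rewrite mem_iota.
set x := fun q : nat * nat => dfsv m T q.1.
set ya := fun q : nat * nat => nth 0 (rev (dfsO m T q.1)) q.2.-1.
set yb := fun q : nat * nat => ancestor m T (dfsv m T q.1) (q.2.*2 - 1).
have Hgood : forall q, q \in s -> [/\ x q <= m, ya q <= m, yb q <= m,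
        Rle42 (gdist T m (ya q) (yb q)) Mx & Rle42 (gdist T m (yb q) (ya q)) Mx].
  move=> [i j] Hq.
  have HX : inQX m T (i, j) by move: Hq; rewrite mem_filter => /andP [].
  have HH : inQH m T (i, j) by move: Hq; rewrite /s Hfilt mem_filter => /andP [].
  exact: (q_bound Hm Htree HX HH HM).
set gX := fun a b => T a b || has (fun q => is_edge (x q) (ya q) a b) s.
set gH := fun a b => T a b || has (fun q => is_edge (x q) (yb q) a b) s.
have EX : forall u v, gdist (GX m T Q) m u v = gdist gX m u v by [].
have EH : forall u v, gdist (GH m T Q) m u v = gdist gH m u v.
  move=> u v. apply: gdist_ext => // a b. by rewrite /GH /gH -Hfilt.
have HXH := @swap_all m T T s x ya yb Mx Hm (fun a b H => H) Hgood.
have Hgood' : forall q, q \in s -> [/\ x q <= m, yb q <= m, ya q <= m,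
        Rle42 (gdist T m (yb q) (ya q)) Mx & Rle42 (gdist T m (ya q) (yb q)) Mx].
  move=> q Hq. by case: (Hgood q Hq).
have HHX := @swap_all m T T s x yb ya Mx Hm (fun a b H => H) Hgood'.
have Hsym : forall (g : rel nat), (forall a b, g a b = g b a) -> forall u v, u <= m -> v <= m ->
   gdist g m u v = gdist g m v u.
  move=> g Hg u v Hu Hv. exact: gdist_sym.
have SX : forall a b, gX a b = gX b a.
  move=> a b. rewrite /gX (Tsym Htree a b). congr (_ || _). apply: eq_has => q. exact: edge_sym.
have SH : forall a b, gH a b = gH b a.
  move=> a b. rewrite /gH (Tsym Htree a b). congr (_ || _). apply: eq_has => q. exact: edge_sym.
move=> eps He.
have := @GH_construct m (fun u v => gdist gX m u v) (fun u v => gdist gH m u v)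
   (INR (size s) * (2 * Mx + 4)) Hm
   (fun u => @gdist_refl gX m u) (fun u => @gdist_refl gH m u)
   (fun u v => @gdist_eq0 gX m Hm u v) (fun u v => @gdist_eq0 gH m Hm u v)
   (fun u v => Hsym gX SX u v) (fun u v => Hsym gH SH u v)
   (fun u v w => @gdist_tri gX m u v w) (fun u v w => @gdist_tri gH m u v w)
   HXH HHX eps He.
move=> [M [delta [phi [phi' [H1 [H2 [H3 H4]]]]]]].
exists M, delta, phi, phi'. split => //. split.
  move=> u v Hu Hv. by rewrite H2 // EX.
split.
  move=> u v Hu Hv. by rewrite H3 // EH.
rewrite -half_eq. exact: H4.
Qed.
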